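(* Let $\mathcal T=(T,\lambda)$ be a temporal oriented tree and let $G$ be its connectivity graph. For every set $S\subseteq V(T)$: $S$ is contained in the vertex set of some temporal path of $\mathcal T$ if and only if $S$ is contained in a clique of $G$.
   Context: A temporal digraph is a pair $(D,\lambda)$ with $D=(V,A)$ a finite digraph and $\lambda:A\to 2^{\{1,\dots,t_{\max}\}}$ giving the time-steps at which each arc is active. A temporal oriented tree $\mathcal T=(T,\lambda)$ is one whose underlying digraph $T$ is an orientation of a tree. A temporal path is a sequence $(v_1,v_2,t_1),\dots,(v_{k-1},v_k,t_{k-1})$ with pairwise distinct $v_i$, $\overrightarrow{v_iv_{i+1}}\in A$, $t_i\in\lambda(\overrightarrow{v_iv_{i+1}})$ and $t_1<\dots<t_{k-1}$; a single vertex is also a temporal path. Two vertices $u\ne v$ are temporally connected if there is a temporal path from $u$ to $v$ or from $v$ to $u$. The connectivity graph of $\mathcal T$ is the undirected graph $G$ with $V(G)=V(T)$ and $uv\in E(G)$ iff $u\neq v$ and $u,v$ are temporally connected. *)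

(* Defs.v *)
From mathcomp Require Import all_boot.
Set Implicit Arguments. Unset Strict Implicit. Unset Printing Implicit Defensive.

(* The time labelling lambda is lam : V -> V -> pred nat; lam u v is the set of
   time-steps of the arc u->v (only relevant when A u v). *)

Definition und (V : finType) (A : rel V) : rel V := fun u v => A u v || A v u.

Definition oriented_tree (V : finType) (A : rel V) : Prop :=
  [/\ (forall u, ~~ A u u),
      (forall u v, A u v -> ~~ A v u),
      (exists v : V, True),
      (forall u v, connect (und A) u v) &
      (forall s : seq V, uniq s -> 3 <= size s -> ~~ cycle (und A) s)].

Definition labelling (V : finType) (A : rel V) (tmax : nat)
  (lam : V -> V -> pred nat) : Prop :=
  forall u v t, A u v -> lam u v t -> (1 <= t <= tmax).

(* A temporal path starting at x: the steps p = [:: (v2,t1); ...; (vk,t_{k-1})].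
   Its vertex sequence is x :: map fst p. *)
Definition temporal_path (V : finType) (A : rel V) (lam : V -> V -> pred nat)
  (x : V) (p : seq (V * nat)) : bool :=
  [&& uniq (x :: map fst p),
      path (fun a b : V * nat => A a.1 b.1 && lam a.1 b.1 b.2) (x, 0) p &
      sorted ltn (map snd p)].

Definition tpath_vertices (V : finType) (x : V) (p : seq (V * nat)) : seq V :=
  x :: map fst p.

Definition treach (V : finType) (A : rel V) (lam : V -> V -> pred nat) (u v : V) : Prop :=
  exists p : seq (V * nat), temporal_path A lam u p /\ last u (map fst p) = v.

Definition conn_edge (V : finType) (A : rel V) (lam : V -> V -> pred nat) (u v : V) : Prop :=
  u <> v /\ (treach A lam u v \/ treach A lam v u).

Definition is_clique (V : finType) (E : V -> V -> Prop) (K : {set V}) : Prop :=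
  forall u v, u \in K -> v \in K -> u <> v -> E u v.

(* Main.v *)
Require Import Defs.
From mathcomp Require Import all_boot.
Set Implicit Arguments. Unset Strict Implicit.

Lemma und_sym (V : finType) (A : rel V) : symmetric (und A).
Proof. by move=> a b; rewrite /und orbC. Qed.

Lemma sub_und (V : finType) (A : rel V) : subrel A (und A).
Proof. by move=> a b h; rewrite /und h. Qed.

Lemma last_rev_belast (T : Type) (y : T) s : last (last y s) (rev (belast y s)) = y.
Proof. case: s => [|z s] //=. by rewrite rev_cons last_rcons. Qed.

Lemma tree_uniq (V : finType) (A : rel V)
  (Hcyc : forall s : seq V, uniq s -> 3 <= size s -> ~~ cycle (und A) s) :
  forall s1 (a : V) s2, path (und A) a s1 -> path (und A) a s2 ->
   uniq (a :: s1) -> uniq (a :: s2) -> last a s1 = last a s2 -> s1 = s2.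
Proof.
elim=> [|x s1 IH] a [|y s2] //=.
- move=> _ _ _ /andP[Ha _] Hl; have := mem_last y s2; rewrite -Hl.
  by move=> h; rewrite h in Ha.
- move=> _ _ /andP[Ha _] _ Hl; have := mem_last x s1; rewrite Hl.
  by move=> h; rewrite h in Ha.
move=> /andP[ax p1] /andP[ay p2] /andP[na u1] /andP[na2 u2] Hl.
have [exy|nxy] := eqVneq x y.
  subst y; congr (_ :: _); exact: IH p1 p2 u1 u2 Hl.
have Hw : path (und A) x (s1 ++ rev (belast y s2)).
  rewrite cat_path p1 /= Hl rev_path.
  apply: sub_path p2 => c d; by rewrite und_sym.
have Hlw : last x (s1 ++ rev (belast y s2)) = y by rewrite last_cat Hl last_rev_belast.
have Hsub : {subset s1 ++ rev (belast y s2) <= (x :: s1) ++ (y :: s2)}.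
  move=> c; rewrite mem_cat mem_rev => /orP[h|/mem_belast h].
    by rewrite mem_cat inE h orbT.
  by rewrite mem_cat h orbT.
move: Hlw Hsub; case/shortenP: Hw => p' Hp' Up' Sp' Hlw Hsub.
have naP : a \notin x :: p'.
  apply/negP => h; have : a \in (x :: s1) ++ (y :: s2).
    move: h; rewrite inE => /orP[/eqP->|h]; first by rewrite mem_head.
    by apply: Hsub; apply: Sp'.
  by rewrite mem_cat (negbTE na) (negbTE na2).
have U : uniq (a :: x :: p') by rewrite cons_uniq naP Up'.
have := Hcyc (a :: x :: p') U.
case: p' Hp' Up' Sp' Hlw Hsub naP U => [|z p'] Hp' Up' Sp' Hlw Hsub naP U.
  by move: nxy; rewrite -Hlw /= eqxx.
move=> /(_ isT); rewrite /= ax /=.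
move: Hp'; rewrite /= => /andP[-> Hp']; rewrite rcons_path Hp' /=.
by rewrite /= in Hlw; rewrite Hlw und_sym ay.
Qed.

Lemma no_closed_walk (V : finType) (A : rel V)
  (Hirr : forall u, ~~ A u u) (Hanti : forall u v, A u v -> ~~ A v u)
  (Hcyc : forall s : seq V, uniq s -> 3 <= size s -> ~~ cycle (und A) s) :
  forall x s, path A x s -> last x s = x -> s = [::].
Proof.
move=> x [//|y s] /= /andP[Axy Hp].
case/shortenP: Hp => p' Hp' Up' _ Hl.
have Cy : cycle A (y :: p') by rewrite /= rcons_path Hp' Hl Axy.
case: p' Hp' Up' Cy Hl => [|z [|z' p']] Hp' Up' Cy Hl.
- by move: Axy; rewrite /= in Hl; rewrite Hl (negbTE (Hirr _)).
- rewrite /= in Hl; subst z; move: Hp' => /= /andP[Ayx _].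
  by move: (Hanti _ _ Axy); rewrite Ayx.
- have := Hcyc _ Up' isT; by rewrite (sub_cycle (@sub_und V A) Cy).
Qed.

Lemma cat_uniq_dir (V : finType) (A : rel V)
  (Hirr : forall u, ~~ A u u) (Hanti : forall u v, A u v -> ~~ A v u)
  (Hcyc : forall s : seq V, uniq s -> 3 <= size s -> ~~ cycle (und A) s) :
  forall z q t, path A z q -> uniq (z :: q) -> path A (last z q) t ->
    uniq (last z q :: t) -> uniq (z :: q ++ t).
Proof.
move=> z q t Pq Uq Pt Ut.
rewrite -cat_cons cat_uniq Uq /=; move: Ut => /= /andP[_ ->]; rewrite andbT.
apply/hasP => -[y yt yzq].
case/splitPl: yzq Pq Uq Pt => q1 q2 Hy Pq Uq Pt.
case/splitPr: yt Pt => t1 t2 Pt.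
have W : path A y (q2 ++ rcons t1 y).
  move: Pq; rewrite cat_path Hy => /andP[_ P2].
  rewrite cat_path P2 rcons_path.
  move: Pt; rewrite last_cat Hy cat_path /= => /andP[-> /andP[-> _]].
  by [].
have := no_closed_walk Hirr Hanti Hcyc W.
rewrite last_cat last_rcons => /(_ erefl).
by case: q2 {W Pq Uq Pt} => //; case: t1.
Qed.

Lemma tp_vpath (V : finType) (A : rel V) (lam : V -> V -> pred nat) x p :
  temporal_path A lam x p -> path A x (map fst p) /\ uniq (x :: map fst p).
Proof.
move=> /and3P[U P _]; split=> //.
rewrite -[x]/((x, 0).1) path_map; apply: sub_path P => a b /andP[h _]; exact: h.
Qed.

Lemma treach_vpath (V : finType) (A : rel V) (lam : V -> V -> pred nat) u v :
  treach A lam u v -> exists s, [/\ path A u s, uniq (u :: s) & last u s = v].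
Proof. by case=> p [/tp_vpath [P U] L]; exists (map fst p). Qed.

Lemma tp_take (V : finType) (A : rel V) (lam : V -> V -> pred nat) x p n :
  temporal_path A lam x p -> temporal_path A lam x (take n p).
Proof.
move=> /and3P[U P S]; apply/and3P; split.
- by rewrite map_take -[x :: _]/(take n.+1 (x :: map fst p)) take_uniq.
- by move: P; rewrite -{1}(cat_take_drop n p) cat_path => /andP[].
- by rewrite map_take take_sorted.
Qed.

Lemma tp_tail (V : finType) (A : rel V) (lam : V -> V -> pred nat) x a p :
  temporal_path A lam x (a :: p) -> temporal_path A lam a.1 p.
Proof.
move=> /and3P[U P S]; apply/and3P; split.
- by move: U => /= /andP[_].
- by move: P => /= /andP[_]; case: p {U S}.
- by move: S => /= /path_sorted.
Qed.

Lemma tp_prefix (V : finType) (x : V) (p : seq (V * nat)) v :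
  v \in x :: map fst p -> exists n, last x (map fst (take n p)) = v.
Proof.
elim: p x => [|a p IH] x /=; first by rewrite inE => /eqP->; exists 0.
rewrite inE => /orP[/eqP->|/IH [n Hn]]; first by exists 0.
by exists n.+1.
Qed.

Lemma tp_comp (V : finType) (A : rel V) (lam : V -> V -> pred nat) x p u v :
  temporal_path A lam x p -> u \in x :: map fst p -> v \in x :: map fst p ->
  u <> v -> treach A lam u v \/ treach A lam v u.
Proof.
have pre : forall x p v, temporal_path A lam x p -> v \in x :: map fst p -> treach A lam x v.
  move=> x0 p0 v0 T /tp_prefix [n Hn]; exists (take n p0); split=> //; exact: tp_take.
elim: p x => [|a p IH] x T.
  by rewrite !inE => /eqP-> /eqP->.
rewrite [u \in _]inE [v \in _]inE => /orP[/eqP->|hu] /orP[/eqP->|hv] //.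
- by left; apply: pre T _; rewrite inE hv orbT.
- by right; apply: pre T _; rewrite inE hu orbT.
- exact: IH (tp_tail T) hu hv.
Qed.

Lemma hard (V : finType) (A : rel V) (lam : V -> V -> pred nat)
  (Hirr : forall u, ~~ A u u) (Hanti : forall u v, A u v -> ~~ A v u)
  (Hcyc : forall s : seq V, uniq s -> 3 <= size s -> ~~ cycle (und A) s) :
  forall s : seq V,
  (forall a b, a \in s -> b \in s -> a <> b -> treach A lam a b \/ treach A lam b a) ->
  s <> [::] ->
  exists u p, [/\ temporal_path A lam u p, u \in s, last u (map fst p) \in s
                & {subset s <= u :: map fst p}].
Proof.
elim=> [//|z s IH] Hc _.
have [-> | ne] := eqVneq s [::].
  exists z, [::]; split=> //; first by rewrite mem_head.
  by rewrite /= mem_head.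
have Hc' : forall a b, a \in s -> b \in s -> a <> b ->
    treach A lam a b \/ treach A lam b a.
  by move=> a b ha hb; apply: Hc; rewrite inE ?ha ?hb orbT.
have [u [p [T us ws Ss]]] := IH Hc' (elimN eqP ne).
have [Pt Ut] := tp_vpath T.
set t := map fst p in Pt Ut ws Ss *.
have [zin|znin] := boolP (z \in u :: t).
  exists u, p; split=> //; rewrite ?inE ?us ?ws ?orbT //.
  by move=> c; rewrite inE => /orP[/eqP->|/Ss].
have zu : z <> u by move=> e; move: znin; rewrite e mem_head.
have zw : z <> last u t by move=> e; move: znin; rewrite e mem_last.
have zs : z \in z :: s by rewrite mem_head.
have us' : u \in z :: s by rewrite inE us orbT.
have ws' : last u t \in z :: s by rewrite inE ws orbT.
have [hzu|huz] := Hc z u zs us' zu;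
have [hzw|hwz] := Hc z (last u t) zs ws' zw.
-
  have [q [Pq Uq Lq]] := treach_vpath hzu.
  case: hzw => p' [T' L']; have [P' U'] := tp_vpath T'.
  have Hq : path A z (q ++ t) by rewrite cat_path Pq Lq.
  have Hu : uniq (z :: q ++ t) by apply: (cat_uniq_dir Hirr Hanti Hcyc) => //; rewrite Lq.
  have E : map fst p' = q ++ t.
    apply: (tree_uniq Hcyc) (sub_path (@sub_und V A) P') (sub_path (@sub_und V A) Hq) U' Hu _.
    by rewrite L' last_cat Lq.
  exists z, p'; split=> //; first by rewrite L' inE ws orbT.
  move=> c; rewrite inE E => /orP[/eqP->|/Ss]; first by rewrite mem_head.
  rewrite inE => /orP[/eqP->|ct]; last by rewrite inE mem_cat ct !orbT.
  by rewrite -Lq -cat_cons mem_cat mem_last.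
-
  have [q [Pq Uq Lq]] := treach_vpath hzu.
  have [r [Pr Ur Lr]] := treach_vpath hwz.
  have W : path A z (q ++ t ++ r) by rewrite cat_path Pq Lq cat_path Pt Pr.
  have := no_closed_walk Hirr Hanti Hcyc W.
  rewrite last_cat Lq last_cat Lr => /(_ erefl).
  by case: q Pq Uq Lq {W} => //= Lq _ _ _; case: zu.
-
  have [r1 [P1 U1 L1]] := treach_vpath huz.
  have [r2 [P2 U2 L2]] := treach_vpath hzw.
  have Hq : path A u (r1 ++ r2) by rewrite cat_path P1 L1.
  have Hu : uniq (u :: r1 ++ r2) by apply: (cat_uniq_dir Hirr Hanti Hcyc) => //; rewrite L1.
  have E : t = r1 ++ r2.
    apply: (tree_uniq Hcyc) (sub_path (@sub_und V A) Pt) (sub_path (@sub_und V A) Hq) Ut Hu _.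
    by rewrite last_cat L1 L2.
  by move: znin; rewrite E -cat_cons mem_cat -L1 mem_last.
-
  have [r [Pr Ur Lr]] := treach_vpath hwz.
  case: huz => p' [T' L']; have [P' U'] := tp_vpath T'.
  have Hq : path A u (t ++ r) by rewrite cat_path Pt Pr.
  have Hu : uniq (u :: t ++ r) by apply: (cat_uniq_dir Hirr Hanti Hcyc).
  have E : map fst p' = t ++ r.
    apply: (tree_uniq Hcyc) (sub_path (@sub_und V A) P') (sub_path (@sub_und V A) Hq) U' Hu _.
    by rewrite L' last_cat Lr.
  exists u, p'; split=> //; first by rewrite L' mem_head.
  move=> c; rewrite inE => /orP[/eqP->|/Ss]; first by rewrite -L' mem_last.
  rewrite E inE => /orP[/eqP->|ct]; first by rewrite mem_head.
  by rewrite inE mem_cat ct !orbT.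
Qed.

Theorem mainTheorem4 (V : finType) (A : rel V) (tmax : nat)
  (lam : V -> V -> pred nat) :
  oriented_tree A -> labelling A tmax lam ->
  forall S : {set V},
    (exists (x : V) (p : seq (V * nat)),
        temporal_path A lam x p /\ {subset S <= tpath_vertices x p})
    <->
    (exists K : {set V}, is_clique (conn_edge A lam) K /\ S \subset K).
Proof.
case=> Hirr Hanti [v0 _] _ Hcyc _ S; split.
  case=> x [p [T Sub]].
  exists [set v | v \in x :: map fst p]; split.
    move=> u v; rewrite !inE => hu hv uv; split=> //.
    exact: tp_comp T hu hv uv.
  by apply/subsetP => v /Sub; rewrite inE.
case=> K [Kc SK].
have [E|ne] := eqVneq (enum S) [::].
  exists v0, [::]; split; first by [].
  by move=> v; rewrite -mem_enum E.
have Hc : forall a b, a \in enum S -> b \in enum S -> a <> b ->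
    treach A lam a b \/ treach A lam b a.
  move=> a b; rewrite !mem_enum => ha hb ab.
  by case: (Kc a b (subsetP SK _ ha) (subsetP SK _ hb) ab).
have [u [p [T _ _ Sub]]] := hard Hirr Hanti Hcyc Hc (elimN eqP ne).
exists u, p; split=> // v; rewrite -mem_enum; exact: Sub.
Qed.
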